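(* Assume $h_0=0$. Then the unique minimizer $\pi^*$ of $\pi\mapsto\max_{(\mu,\sigma)\in D}F(\pi,\mu,\sigma)$ is $$\pi^*=\begin{cases}\dfrac{h_1\sigma_-}{\sigma_-^2+\mu_+^2},&\text{if } \sigma_+\sigma_--2\mu_+^2\le\sigma_-^2,\\[2mm] \dfrac{h_1}{\sigma_M},&\text{if } \sigma_-^2<\sigma_+\sigma_--2\mu_+^2.\end{cases}$$ Moreover, the minimum of $\psi$ over $D$ is attained on the side $\{x=\mu_+\}$ of $D$.
   Context: Let $0<\mu_-<\mu_+$ and $0<\sigma_-<\sigma_+$ be real numbers, $D=[\mu_-,\mu_+]\times[\sigma_-,\sigma_+]$, and $h_0,h_1\in\mathbb R$. For $\pi\in\mathbb R$ and $(\mu,\sigma)\in D$ put $F(\pi,\mu,\sigma)=(h_0-\pi\mu)^2+(h_1-\pi\sigma)^2$. Write $\mu_M=(\mu_++\mu_-)/2$ and $\sigma_M=(\sigma_++\sigma_-)/2$. For $(x,y)\in D$ let $$\psi(x,y)=\frac{(h_0x+h_1y)^2}{2\mu_Mx+2\sigma_My-\mu_-\mu_+-\sigma_-\sigma_+}.$$ *)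

(* Defs.v *)
From Stdlib Require Import Reals ClassicalEpsilon.
Open Scope R_scope.

Definition inD (mum mup sgm sgp mu sg : R) : Prop :=
  mum <= mu <= mup /\ sgm <= sg <= sgp.

Definition F (h0 h1 pi mu sg : R) : R :=
  (h0 - pi * mu) ^ 2 + (h1 - pi * sg) ^ 2.

Definition is_max_F (mum mup sgm sgp h0 h1 pi m : R) : Prop :=
  (exists mu sg, inD mum mup sgm sgp mu sg /\ F h0 h1 pi mu sg = m) /\
  (forall mu sg, inD mum mup sgm sgp mu sg -> F h0 h1 pi mu sg <= m).

(* G(pi) = max_{(mu,sigma) in D} F(pi,mu,sigma), chosen by Hilbert epsilon
   (the maximum exists since D is compact and F continuous). *)
Definition Fmax (mum mup sgm sgp h0 h1 pi : R) : R :=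
  epsilon (inhabits 0) (is_max_F mum mup sgm sgp h0 h1 pi).

Definition unique_minimizer (mum mup sgm sgp h0 h1 p : R) : Prop :=
  (forall pi, Fmax mum mup sgm sgp h0 h1 p <= Fmax mum mup sgm sgp h0 h1 pi) /\
  (forall q, (forall pi, Fmax mum mup sgm sgp h0 h1 q <= Fmax mum mup sgm sgp h0 h1 pi) ->
             q = p).

Definition muM (mum mup : R) : R := (mup + mum) / 2.
Definition sgM (sgm sgp : R) : R := (sgp + sgm) / 2.

Definition psi (mum mup sgm sgp h0 h1 x y : R) : R :=
  (h0 * x + h1 * y) ^ 2 /
  (2 * muM mum mup * x + 2 * sgM sgm sgp * y - mum * mup - sgm * sgp).

(* Main.v *)
Require Import Defs.
From Stdlib Require Import Reals Lra Psatz Ranalysis ClassicalEpsilon.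
Open Scope R_scope.

Section S.
Variables (mum mup sgm sgp h1 : R).
Hypotheses (Hmu0 : 0 < mum) (Hmu : mum < mup) (Hsg0 : 0 < sgm) (Hsg : sgm < sgp).

Let A pi := F 0 h1 pi mup sgm.
Let B pi := F 0 h1 pi mup sgp.

Lemma ismax pi : is_max_F mum mup sgm sgp 0 h1 pi (Rmax (A pi) (B pi)).
Proof.
  split.
  - unfold Rmax; destruct (Rle_dec (A pi) (B pi)).
    + exists mup, sgp; split; [unfold inD; repeat split; lra | reflexivity].
    + exists mup, sgm; split; [unfold inD; repeat split; lra | reflexivity].
  - intros mu sg [[H1 H2] [H3 H4]].
    assert (Hm : (0 - pi*mu)^2 <= (0 - pi*mup)^2) by (assert (mu*mu <= mup*mup) by nra; assert (0 <= pi*pi) by nra; nra).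
    assert (Hs : (h1 - pi*sg)^2 <= (h1-pi*sgm)^2 \/ (h1 - pi*sg)^2 <= (h1-pi*sgp)^2).
    { destruct (Rle_dec 0 pi).
      - assert (pi*sgm <= pi*sg <= pi*sgp) by (split; nra).
        destruct (Rle_dec (h1 - pi*sg) 0); [right|left]; nra.
      - assert (pi*sgp <= pi*sg <= pi*sgm) by (split; nra).
        destruct (Rle_dec (h1 - pi*sg) 0); [left|right]; nra. }
    unfold F; destruct Hs.
    + eapply Rle_trans; [|apply Rmax_l]; unfold A, F; lra.
    + eapply Rle_trans; [|apply Rmax_r]; unfold B, F; lra.
Qed.

Lemma Fmax_eq pi : Fmax mum mup sgm sgp 0 h1 pi = Rmax (A pi) (B pi).
Proof.
  unfold Fmax.
  destruct (epsilon_spec (inhabits 0) (is_max_F mum mup sgm sgp 0 h1 pi)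
    (ex_intro _ _ (ismax pi))) as [[x [y [Hxy Hf]]] Hb].
  destruct (ismax pi) as [[x' [y' [Hxy' Hf']]] Hb'].
  apply Rle_antisym.
  - rewrite <- Hf; apply Hb'; auto.
  - rewrite <- Hf'; apply Hb; auto.
Qed.

Lemma strict_to_um p :
  (forall pi, pi <> p -> Rmax (A p) (B p) < Rmax (A pi) (B pi)) ->
  unique_minimizer mum mup sgm sgp 0 h1 p.
Proof.
  intros H; split.
  - intros pi; rewrite !Fmax_eq; destruct (Req_dec pi p).
    + subst; lra.
    + left; auto.
  - intros q Hq; destruct (Req_dec q p); auto.
    specialize (Hq p); rewrite !Fmax_eq in Hq; specialize (H q H0); lra.
Qed.

Lemma case1 : sgp * sgm - 2 * mup ^ 2 <= sgm ^ 2 ->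
  unique_minimizer mum mup sgm sgp 0 h1 (h1 * sgm / (sgm ^ 2 + mup ^ 2)).
Proof.
  intros C. set (k := sgm^2 + mup^2). set (p := h1 * sgm / k).
  assert (Hk : 0 < k) by (unfold k; nra).
  assert (Hp : p * k = h1 * sgm) by (unfold p; field; lra).
  apply strict_to_um. intros pi Hne.
  assert (E1 : sgm * (p * (2*h1 - p*(sgm+sgp))) >= 0).
  { assert (sgm * (p * (2*h1 - p*(sgm+sgp))) = p^2 * (2*k - sgm*(sgm+sgp))) by
      (transitivity (2*p*(h1*sgm) - sgm*p^2*(sgm+sgp)); [ring | rewrite <- Hp; ring]).
    assert (0 <= 2*k - sgm*(sgm+sgp)) by (unfold k; nra). nra. }
  assert (E2 : p * (2*h1 - p*(sgm+sgp)) >= 0).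
  { destruct (Rle_dec 0 (p * (2*h1 - p*(sgm+sgp)))); nra. }
  assert (BA : B p <= A p) by (unfold A, B, F; nra).
  rewrite Rmax_left by lra.
  eapply Rlt_le_trans; [|apply Rmax_l].
  assert (A pi - A p = k * (pi - p)^2) by
    (transitivity (k*(pi^2-p^2) - 2*(h1*sgm)*(pi-p));
     [unfold A, F, k; ring | rewrite <- Hp; ring]).
  assert (0 < (pi-p)^2) by
    (assert (Hd : pi - p <> 0) by lra; pose proof (Rsqr_pos_lt _ Hd);
     unfold Rsqr in *; lra).
  nra.
Qed.

Lemma case2 : sgm ^ 2 < sgp * sgm - 2 * mup ^ 2 ->
  unique_minimizer mum mup sgm sgp 0 h1 (h1 / sgM sgm sgp).
Proof.
  intros C. set (s := sgM sgm sgp). set (c := h1 / s).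
  assert (Hs : s = (sgp+sgm)/2) by reflexivity.
  assert (Hs0 : 0 < s) by lra.
  assert (Hc : h1 = c * s) by (unfold c; field; lra).
  clearbody c s.
  set (kA := sgm^2 + mup^2). set (kB := sgp^2 + mup^2).
  assert (HkA : 0 < kA) by (unfold kA; nra).
  assert (HkB : 0 < kB) by (unfold kB; nra).
  assert (CA : kA - s*sgm < 0) by (unfold kA; rewrite Hs; nra).
  assert (CB : kB - s*sgp > 0) by (unfold kB; rewrite Hs; nra).
  apply strict_to_um. intros pi Hne.
  assert (AB : A c = B c).
  { unfold A, B, F; rewrite Hc.
    transitivity (c^2*mup^2 + c^2*(s-sgm)^2); [ring|].
    replace (s - sgm) with (-(s-sgp)) by lra. ring. }
  assert (EA : A pi - A c = kA*(pi-c)^2 + 2*c*(pi-c)*(kA - s*sgm)).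
  { transitivity (kA*(pi^2-c^2) - 2*h1*sgm*(pi-c)); [unfold A, F, kA; ring|].
    rewrite Hc; ring. }
  assert (EB : B pi - B c = kB*(pi-c)^2 + 2*c*(pi-c)*(kB - s*sgp)).
  { transitivity (kB*(pi^2-c^2) - 2*h1*sgp*(pi-c)); [unfold B, F, kB; ring|].
    rewrite Hc; ring. }
  assert (Hd : pi - c <> 0) by lra.
  pose proof (Rsqr_pos_lt _ Hd). unfold Rsqr in *.
  rewrite <- AB, Rmax_left by lra.
  destruct (Rle_dec 0 (c*(pi-c))).
  - eapply Rlt_le_trans; [|apply Rmax_r].
    assert (0 <= c*(pi-c)*(kB - s*sgp)) by nra. nra.
  - eapply Rlt_le_trans; [|apply Rmax_l].
    assert (0 <= c*(pi-c)*(kA - s*sgm)) by nra. nra.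
Qed.

Lemma psi_part :
  exists y, sgm <= y <= sgp /\
     forall x' y', inD mum mup sgm sgp x' y' ->
       psi mum mup sgm sgp 0 h1 mup y <= psi mum mup sgm sgp 0 h1 x' y'.
Proof.
  assert (Hden : forall x y, mum <= x <= mup -> sgm <= y <= sgp ->
     0 < 2 * muM mum mup * x + 2 * sgM sgm sgp * y - mum * mup - sgm * sgp).
  { intros x y Hx Hy; unfold muM, sgM. nra. }
  destruct (continuity_ab_min (fun y => psi mum mup sgm sgp 0 h1 mup y) sgm sgp)
    as [y [Hmin Hy]]; [lra| |].
  { intros y Hy. unfold psi. apply continuity_pt_div.
    - reg.
    - reg.
    - specialize (Hden mup y ltac:(lra) Hy). lra. }
  exists y; split; auto.
  intros x' y' [Hx Hy'].
  eapply Rle_trans; [apply (Hmin y' Hy')|].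
  unfold psi, Rdiv; rewrite !Rmult_0_l, !Rplus_0_l. apply Rmult_le_compat_l.
  - apply pow2_ge_0.
  - apply Rinv_le_contravar; [apply Hden; lra|].
    unfold muM; nra.
Qed.

End S.

Theorem mainTheorem9 (mum mup sgm sgp h0 h1 : R)
  (Hmu0 : 0 < mum) (Hmu : mum < mup) (Hsg0 : 0 < sgm) (Hsg : sgm < sgp)
  (Hh0 : h0 = 0) :
  (sgp * sgm - 2 * mup ^ 2 <= sgm ^ 2 ->
     unique_minimizer mum mup sgm sgp h0 h1 (h1 * sgm / (sgm ^ 2 + mup ^ 2))) /\
  (sgm ^ 2 < sgp * sgm - 2 * mup ^ 2 ->
     unique_minimizer mum mup sgm sgp h0 h1 (h1 / sgM sgm sgp)) /\
  (exists y, sgm <= y <= sgp /\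
     forall x' y', inD mum mup sgm sgp x' y' ->
       psi mum mup sgm sgp h0 h1 mup y <= psi mum mup sgm sgp h0 h1 x' y').
Proof.
  subst h0. split; [|split].
  - apply case1; auto.
  - apply case2; auto.
  - apply psi_part; auto.
Qed.
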